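(* Let $\mathfrak{g}$ be a finite-dimensional complex Lie algebra and let $x\cdot y=[\phi(x),y]$ be a nil-inner CPA-structure on $\mathfrak{g}$, where $\phi:\mathfrak{g}\to\mathfrak{g}$ is a nilpotent Lie algebra homomorphism. Then $\phi(\mathfrak{g})\subseteq\mathrm{nil}(\mathfrak{g})$ and $\mathrm{fix}(\mathfrak{g})\subseteq\ker(\phi)$.
   Context: A CPA-structure on $\mathfrak{g}$ is a bilinear product $x\cdot y$ satisfying, for all $x,y,z$: $x\cdot y=y\cdot x$; $[x,y]\cdot z=x\cdot(y\cdot z)-y\cdot(x\cdot z)$; $x\cdot[y,z]=[x\cdot y,z]+[y,x\cdot z]$. $\mathrm{nil}(\mathfrak{g})$ is the nilradical of $\mathfrak{g}$. $\mathrm{fix}(\mathfrak{g})$ is the Lie ideal of $\mathfrak{g}$ generated by $\{x\in\mathfrak{g}\mid\mathrm{ad}(y)x=x\text{ for some }y\in\mathfrak{g}\}$. *)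

(* Defs.v *)
From HB Require Import structures.
From mathcomp Require Import all_boot all_algebra reals.
From mathcomp.real_closed Require Import complex.
Set Implicit Arguments. Unset Strict Implicit. Unset Printing Implicit Defensive.
Import GRing.Theory.
Local Open Scope ring_scope.

Section Lie.
Variables (K : fieldType) (V : vectType K).
Implicit Types (br : V -> V -> V).

Definition bilinear_map br : Prop :=
  (forall x (a : K) y z, br x (a *: y + z) = a *: br x y + br x z) /\
  (forall y (a : K) x z, br (a *: x + z) y = a *: br x y + br z y).

Definition is_lie_bracket br : Prop :=
  [/\ bilinear_map br,
      (forall x, br x x = 0) &
      (forall x y z, br x (br y z) + br y (br z x) + br z (br x y) = 0)].

Definition is_CPA br (prod : V -> V -> V) : Prop :=
  [/\ bilinear_map prod,
      (forall x y, prod x y = prod y x),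
      (forall x y z, prod (br x y) z = prod x (prod y z) - prod y (prod x z)) &
      (forall x y z, prod x (br y z) = br (prod x y) z + br y (prod x z))].

Definition lie_hom br (phi : 'End(V)) : Prop :=
  forall x y, phi (br x y) = br (phi x) (phi y).

Definition nilpotent_map (phi : 'End(V)) : Prop :=
  exists n, forall x, iter n phi x = 0.

Definition lie_ideal br (I : {vspace V}) : Prop :=
  forall x y, y \in I -> br x y \in I.

(* [I, J] : the subspace spanned by the brackets [u, v], u in I, v in J
   (by bilinearity, spanned by the brackets of basis vectors). *)
Definition bracket_space br (I J : {vspace V}) : {vspace V} :=
  <<[seq br u v | u <- vbasis I, v <- vbasis J]>>%VS.

Fixpoint lcs br (I : {vspace V}) (n : nat) : {vspace V} :=
  match n with
  | 0 => I
  | n'.+1 => bracket_space br I (lcs br I n')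
  end.

Definition nilpotent_ideal br (I : {vspace V}) : Prop :=
  lie_ideal br I /\ exists n, lcs br I n = 0%VS.

Definition is_nilradical br (N : {vspace V}) : Prop :=
  nilpotent_ideal br N /\
  forall I, nilpotent_ideal br I -> (I <= N)%VS.

(* fix(g): the Lie ideal generated by {x | ad(y) x = x for some y},
   i.e. the intersection of all ideals containing this set. *)
Definition fix_gen br (x : V) : Prop := exists y, br y x = x.

Definition in_fix br (x : V) : Prop :=
  forall I : {vspace V}, lie_ideal br I ->
    (forall z, fix_gen br z -> z \in I) -> x \in I.

End Lie.

(* Main.v *)
Require Import Defs.
From HB Require Import structures.
From mathcomp Require Import all_boot all_algebra reals.
From mathcomp.real_closed Require Import complex.
From Stdlib Require Import Classical Lia.
From mathcomp Require Import zify.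
Local Open Scope ring_scope.
Import GRing.Theory.

Lemma subspace_vspace (K : fieldType) (V : vectType K) (P : V -> Prop) :
  P 0 -> (forall (a : K) x y, P x -> P y -> P (a *: x + y)) ->
  exists W : {vspace V}, forall v, v \in W <-> P v.
Proof.
move=> P0 PL.
suff H : forall m (W : {vspace V}), (\dim (fullv : {vspace V}) - \dim W <= m)%N ->
  (forall w, w \in W -> P w) -> exists W' : {vspace V}, forall v, v \in W' <-> P v.
  apply: (H _ 0%VS (leq_subr _ _)).
  by move=> w; rewrite memv0 => /eqP ->.
elim=> [|m IH] W hm hW.
- case: (classic (forall v, P v -> v \in W)) => [hall|nall].
    by exists W; move=> v; split; [apply: hW|apply: hall].
  have [v hv] := not_all_ex_not _ _ nall.
  have [Pv vW] := imply_to_and _ _ hv.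
  pose W' := (W + <[v]>)%VS.
  have sWW' : (W <= W')%VS by apply: addvSl.
  have nWW' : W != W'.
    apply/eqP=> e; apply: vW; rewrite e; apply/memv_addP.
    by exists 0; [exact: mem0v| exists v; [exact: memv_line | by rewrite add0r]].
  have lt : (\dim W < \dim W')%N by rewrite (ltn_leqif (dimv_leqif_eq sWW')).
  have le : (\dim W' <= \dim (fullv : {vspace V}))%N by apply: dimvS; apply: subvf.
  by move: hm; rewrite leqn0 subn_eq0 => /(leq_trans le); rewrite leqNgt lt.
- case: (classic (forall v, P v -> v \in W)) => [hall|nall].
    by exists W; move=> v; split; [apply: hW|apply: hall].
  have [v hv] := not_all_ex_not _ _ nall.
  have [Pv vW] := imply_to_and _ _ hv.
  pose W' := (W + <[v]>)%VS.
  have sWW' : (W <= W')%VS by apply: addvSl.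
  have nWW' : W != W'.
    apply/eqP=> e; apply: vW; rewrite e; apply/memv_addP.
    by exists 0; [exact: mem0v| exists v; [exact: memv_line | by rewrite add0r]].
  have lt : (\dim W < \dim W')%N by rewrite (ltn_leqif (dimv_leqif_eq sWW')).
  have le : (\dim W' <= \dim (fullv : {vspace V}))%N by apply: dimvS; apply: subvf.
  apply: (IH W').
    move: lt le hm; lia.
  move=> w /memv_addP [u uW [z /vlineP [k ->] ->]].
  by rewrite addrC; apply: PL => //; apply: hW.
Qed.

Theorem lemma4p6 (R : realType) (V : vectType R[i]) (br : V -> V -> V)
    (phi : 'End(V)) :
  is_lie_bracket br ->
  lie_hom br phi ->
  nilpotent_map phi ->
  is_CPA br (fun x y => br (phi x) y) ->
  (forall N : {vspace V}, is_nilradical br N -> forall x, phi x \in N) /\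
  (forall x, in_fix br x -> phi x = 0).
Proof.
move=> [[bl bl2] anti jac] hom [n nil] [_ comm _ _].
have br0r : forall x, br x 0 = 0.
  move=> x; have h := bl x 1 0 0; rewrite scaler0 addr0 scale1r in h.
  by rewrite -{1}[br x 0]addr0 in h; apply/esym/(addrI _ h).
have br0l : forall x, br 0 x = 0.
  move=> x; have h := bl2 x 1 0 0; rewrite scaler0 addr0 scale1r in h.
  by rewrite -{1}[br 0 x]addr0 in h; apply/esym/(addrI _ h).
have brDr : forall x y z, br x (y + z) = br x y + br x z.
  by move=> x y z; have := bl x 1 y z; rewrite !scale1r.
have brDl : forall x y z, br (y + z) x = br y x + br z x.
  by move=> x y z; have := bl2 x 1 y z; rewrite !scale1r.
have brZr : forall x (a : R[i]) y, br x (a *: y) = a *: br x y.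
  by move=> x a y; have := bl x a y 0; rewrite !addr0 br0r addr0.
have brNr : forall x y, br x (- y) = - br x y.
  by move=> x y; rewrite -scaleN1r brZr scaleN1r.
have brNl : forall x y, br (- y) x = - br y x.
  move=> x y; have := bl2 x (-1) y 0; rewrite !addr0 br0l addr0 scaleN1r.
  by move=> ->; rewrite scaleN1r.
have brBr : forall x y z, br x (y - z) = br x y - br x z.
  by move=> x y z; rewrite brDr brNr.
have antis : forall x y, br y x = - br x y.
  move=> x y; have := anti (x + y); rewrite brDr !brDl !anti add0r addr0.
  by move/eqP; rewrite addr_eq0 => /eqP.
have key : forall u v, br (phi u) v = - br u (phi v).
  by move=> u v; rewrite comm antis.
have jac2 : forall y u v, br (br y u) v = br y (br u v) - br u (br y v).
  move=> y u v; have := jac y u v.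
  rewrite (antis (br y u) v) (antis y v) brNr => h.
  by rewrite -[LHS]add0r -h subrK.
have iterL : forall k (a : R[i]) x y,
    iter k phi (a *: x + y) = a *: iter k phi x + iter k phi y.
  by elim=> [|k IH] a x y //=; rewrite IH linearP.
have iter0 : forall k, iter k phi 0 = 0.
  by elim=> [|k IH] //=; rewrite IH linear0.
have iterB : forall k x y, iter k phi (x - y) = iter k phi x - iter k phi y.
  by elim=> [|k IH] x y //=; rewrite IH linearB.
have iterH : forall k a b, iter k phi (br a b) = br (iter k phi a) (iter k phi b).
  by elim=> [|k IH] a b //=; rewrite IH hom.
have iterN : forall k x, (n <= k)%N -> iter k phi x = 0.
  by move=> k x /subnK <-; rewrite iterD nil iter0.
have sign : forall k x w, br (iter k phi x) w = (-1) ^+ k *: br x (iter k phi w).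
  elim=> [|k IH] x w; first by rewrite expr0 scale1r.
  by rewrite iterS key IH -iterSr exprS mulN1r scaleNr.
split; last first.
  have fixphi : forall z y, br y z = z -> phi z = 0.
    move=> z y hz.
    have step : forall k, exists s : R[i], iter k phi z = s *: br y (iter (k + k) phi z).
      elim=> [|k [s hs]]; first by exists 1; rewrite scale1r /= hz.
      exists (- s); rewrite iterS hs linearZ /= hom key.
      by rewrite addnS iterS scaleNr scalerN.
    have gen : forall d k, (0 < k)%N -> (n <= k + d)%N -> iter k phi z = 0.
      elim=> [|d IH] k k0 hk; first by apply: iterN; rewrite addn0 in hk.
      have [s ->] := step k.
      by rewrite (IH (k + k)%N) ?br0r ?scaler0 //; [rewrite addn_gt0 k0 | lia].
    exact: (gen n 1%N).
  move=> x hx; apply/eqP; rewrite -memv_ker; apply: hx.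
    by move=> a b; rewrite !memv_ker => /eqP hb; rewrite hom hb br0r.
  by move=> z [y hy]; rewrite memv_ker (fixphi z y hy).
pose Y u := forall c v, iter c phi v = 0 -> iter c.-1 phi (br u v) = 0.
have [J hJ] : exists J : {vspace V}, forall v, v \in J <-> Y v.
  apply: subspace_vspace.
    by move=> c v _; rewrite br0l iter0.
  move=> a x y hx hy c v hv; rewrite bl2 iterL (hx c v hv) (hy c v hv).
  by rewrite scaler0 addr0.
have idJ : lie_ideal br J.
  move=> x y /hJ hy; apply/hJ => c v hv; rewrite jac2 iterB iterH.
  rewrite (hy c v hv) br0r (hy c (br x v)) ?subrr //.
  by rewrite iterH hv br0r.
have phiJ : forall x, phi x \in J.
  move=> x; apply/hJ; case=> [|c] v hv; first by move: hv => /= ->; rewrite br0r.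
  rewrite -[c.+1.-1]/c.
  rewrite iterH -iterSr sign -iterD addnC iterD hv iter0 br0r scaler0 //.
have lcsJ : forall k v, v \in lcs br J k -> iter (n - k) phi v = 0.
  elim=> [|k IH] v; first by rewrite subn0 => _; apply: iterN.
  have [Kc hK] : exists Kc : {vspace V}, forall v, v \in Kc <-> iter (n - k.+1) phi v = 0.
    apply: subspace_vspace; first exact: iter0.
    by move=> a x y hx hy; rewrite iterL hx hy scaler0 addr0.
  move=> hv; apply/hK; move: v hv; apply/subvP/span_subvP => z /allpairsP [[u w] [/= hu hw ->]].
  apply/hK; have := (proj1 (hJ u) (vbasis_mem hu)) (n - k)%N w (IH w (vbasis_mem hw)).
  by rewrite subnS.
have lcs0 : lcs br J n = 0%VS.
  apply/eqP; rewrite -subv0; apply/subvP => v hv; rewrite memv0; apply/eqP.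
  by have := lcsJ n v hv; rewrite subnn.
move=> N [_ maxN] x; apply: (subvP (maxN J _)); last exact: phiJ.
by split; [exact: idJ | exists n].
Qed.
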